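(* Let $\omega\in\mathbb{F}_8$ be a root of $y^3+y+1$, let $m\in\mathbb{N}$, let $L,M,N$ be nonempty subsets of $[m]$, and let $D=\Delta_L+\omega\Delta_M+\omega^2\Delta_N\subseteq\mathbb{F}_8^m$, so that $D^{(2)}=\{(d_1,d_3,d_2): d_1\in\Delta_L,d_2\in\Delta_M,d_3\in\Delta_N\}\subseteq(\mathbb{F}_2^m)^3$. Let $s=|L|+|M|+|N|$. Then the binary code $C^{(2)}_{D^*}=\{c^{(2)}_{D^*}(\alpha,\beta,\gamma):\alpha,\beta,\gamma\in\mathbb{F}_2^m\}$, where $c^{(2)}_{D^*}(\alpha,\beta,\gamma)=((\alpha,\beta,\gamma)\cdot(d_1,d_3,d_2))_{(d_1,d_3,d_2)\in D^{(2)}\setminus\{0\}}$, is a $[2^s-1,\,s,\,2^{s-1}]$ linear $1$-weight code over $\mathbb{F}_2$, with exactly $1$ codeword of weight $0$ and $2^s-1$ codewords of weight $2^{s-1}$. In particular, it is a minimal code. Further, it is a Griesmer code and hence distance optimal. If $Z_i=|\{(\alpha,\beta,\gamma)\in(\mathbb{F}_2^m)^3: wt(c^{(2)}_{D^*}(\alpha,\beta,\gamma))=i\}|$, then $Z_0=2^{3m-s}$ and $Z_{2^{s-1}}=2^{3m-s}(2^s-1)$.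
   Context: $[m]=\{1,\dots,m\}$; $\Delta_L=\{w\in\mathbb{F}_2^m:\{i:w_i\ne0\}\subseteq L\}$; $A+\omega B+\omega^2C=\{a+\omega b+\omega^2c: a\in A,b\in B,c\in C\}$. The dot product on $(\mathbb{F}_2^m)^3=\mathbb{F}_2^{3m}$ is the standard one. (This code is the subfield code, with respect to the basis $\{1,\omega,\omega^2\}$, of the octanary code $C_{D^*}=\{(v\cdot d)_{d\in D\setminus\{0\}}:v\in\mathbb{F}_8^m\}$.) A code is $1$-weight if all nonzero codewords have the same Hamming weight; minimal if for every nonzero codeword $c$, each nonzero codeword $c'$ with $\mathrm{Supp}(c')\subseteq\mathrm{Supp}(c)$ is a scalar multiple of $c$; Griesmer if its parameters $[n,k,d]$ over $\mathbb{F}_q$ satisfy $\sum_{i=0}^{k-1}\lceil d/q^i\rceil=n$; distance optimal if no $[n,k,d+1]$ linear code exists. *)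

(* Defs.v *)
From HB Require Import structures.
From mathcomp Require Import all_boot all_order all_algebra all_field.
Set Implicit Arguments. Unset Strict Implicit. Unset Printing Implicit Defensive.
Import GRing.Theory.
Local Open Scope ring_scope.

Section Codes.
Variable F : finFieldType.

Definition supp n (v : 'rV[F]_n) : {set 'I_n} := [set j | v 0 j != 0].
Definition wt n (v : 'rV[F]_n) : nat := #|supp v|.

Definition linear_code n (C : {set 'rV[F]_n}) : Prop :=
  0 \in C /\ forall (a : F) x y, x \in C -> y \in C -> a *: x + y \in C.

Definition min_dist n (C : {set 'rV[F]_n}) (d : nat) : Prop :=
  (exists2 c, c \in C & (c != 0) && (wt c == d)) /\
  (forall c, c \in C -> c != 0 -> (d <= wt c)%N).

Definition nkd_code n (C : {set 'rV[F]_n}) (k d : nat) : Prop :=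
  [/\ linear_code C, #|C| = (#|F| ^ k)%N & min_dist C d].

Definition one_weight n (C : {set 'rV[F]_n}) : Prop :=
  forall c c', c \in C -> c' \in C -> c != 0 -> c' != 0 -> wt c = wt c'.

Definition minimal_code n (C : {set 'rV[F]_n}) : Prop :=
  forall c c', c \in C -> c' \in C -> c != 0 -> c' != 0 ->
    supp c' \subset supp c -> exists a : F, c' = a *: c.

Definition ceil_div (a b : nat) : nat := ((a + b - 1) %/ b)%N.

Definition griesmer_code n (C : {set 'rV[F]_n}) (k d : nat) : Prop :=
  nkd_code C k d /\ (\sum_(i < k) ceil_div d (#|F| ^ i)%N)%N = n.

Definition distance_optimal n (C : {set 'rV[F]_n}) (k d : nat) : Prop :=
  nkd_code C k d /\ ~ exists C' : {set 'rV[F]_n}, nkd_code C' k d.+1.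
End Codes.

Notation F2 := ('F_2).

Definition dotv m (u v : 'rV[F2]_m) : F2 := \sum_(i < m) u 0 i * v 0 i.

Definition Delta m (L : {set 'I_m}) : {set 'rV[F2]_m} :=
  [set w : 'rV[F2]_m | [forall i, (w 0 i != 0) ==> (i \in L)]].

Definition triple m := ('rV[F2]_m * 'rV[F2]_m * 'rV[F2]_m)%type.

Definition dot3 m (x y : triple m) : F2 :=
  dotv x.1.1 y.1.1 + dotv x.1.2 y.1.2 + dotv x.2 y.2.

Definition D2 m (L M N : {set 'I_m}) : {set triple m} :=
  [set d : triple m | [&& d.1.1 \in Delta L, d.1.2 \in Delta N & d.2 \in Delta M]].

Definition D2star m (L M N : {set 'I_m}) : {set triple m} := D2 L M N :\ ((0, 0, 0) : triple m).

Definition clen m (L M N : {set 'I_m}) : nat := #|D2star L M N|.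

(* codeword c(alpha,beta,gamma) = ((alpha,beta,gamma).d)_{d in D^(2)\{0}},
   coordinates ordered by the canonical enumeration of D2star *)
Definition cw m (L M N : {set 'I_m}) (x : triple m) : 'rV[F2]_(clen L M N) :=
  \row_(j < clen L M N) dot3 x (enum_val j).

Definition code m (L M N : {set 'I_m}) : {set 'rV[F2]_(clen L M N)} :=
  [set cw L M N x | x in [set: triple m]].

Definition Z m (L M N : {set 'I_m}) (i : nat) : nat :=
  #|[set x : triple m | wt (cw L M N x) == i]|.

(* Main.v *)
Require Import Defs.
From mathcomp Require Import all_boot all_order all_algebra all_field.
From mathcomp Require Import ring zify.
Set Implicit Arguments. Unset Strict Implicit. Unset Printing Implicit Defensive.
Import GRing.Theory.
Local Open Scope ring_scope.

Lemma F2cases (a : F2) : a = 0 \/ a = 1.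
Proof. case: a => [[|[|n]]] Hn; [left|right|]; try by apply/val_inj. by []. Qed.
Lemma cardF2 : #|F2| = 2%N.
Proof. by rewrite card_Fp. Qed.
Lemma F2_11 : (1 + 1 : F2) = 0.
Proof. by apply/val_inj. Qed.
Lemma F2_add_self (a : F2) : a + a = 0.
Proof. by case: (F2cases a) => ->; rewrite ?addr0 ?F2_11. Qed.
Lemma F2_neq0 (a : F2) : a != 0 -> a = 1.
Proof. by case: (F2cases a) => ->; rewrite ?eqxx. Qed.
Lemma F2_one_neq0 : (1 : F2) != 0.
Proof. exact: oner_neq0. Qed.
Lemma row_add_self n (v : 'rV[F2]_n) : v + v = 0.
Proof. by apply/rowP => j; rewrite !mxE F2_add_self. Qed.

Section S.
Variable m : nat.
Implicit Types (u v w : 'rV[F2]_m) (S : {set 'I_m}) (x y d e : triple m).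

Lemma dotvDl u u' v : dotv (u + u') v = dotv u v + dotv u' v.
Proof. by rewrite /dotv -big_split; apply: eq_bigr => i _; rewrite mxE mulrDl. Qed.
Lemma dotvDr u v v' : dotv u (v + v') = dotv u v + dotv u v'.
Proof. by rewrite /dotv -big_split; apply: eq_bigr => i _; rewrite mxE mulrDr. Qed.
Lemma dotv0l v : dotv 0 v = 0.
Proof. by rewrite /dotv big1 // => i _; rewrite mxE mul0r. Qed.
Lemma dotv0r v : dotv v 0 = 0.
Proof. by rewrite /dotv big1 // => i _; rewrite mxE mulr0. Qed.

Definition tadd x y : triple m := (x.1.1 + y.1.1, x.1.2 + y.1.2, x.2 + y.2).
Definition t0 : triple m := (0, 0, 0).

Lemma dot3Dl x y d : dot3 (tadd x y) d = dot3 x d + dot3 y d.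
Proof.
rewrite /dot3 /= !dotvDl; ring.
Qed.
Lemma dot3Dr x d e : dot3 x (tadd d e) = dot3 x d + dot3 x e.
Proof.
rewrite /dot3 /= !dotvDr; ring.
Qed.
Lemma dot3_0l d : dot3 t0 d = 0.
Proof. by rewrite /dot3 /= !dotv0l !addr0. Qed.
Lemma dot3_0r x : dot3 x t0 = 0.
Proof. by rewrite /dot3 /= !dotv0r !addr0. Qed.

Lemma tadd_self x : tadd x x = t0.
Proof. by rewrite /tadd !row_add_self. Qed.
Lemma taddK e d : tadd e (tadd e d) = d.
Proof. by case: d => [[a b] c]; rewrite /tadd /= !addrA !row_add_self !add0r. Qed.
Lemma tadd_eq0 x y : tadd x y = t0 -> x = y.
Proof.
case: x => [[a b] c]; case: y => [[a' b'] c'] [] /= Ha Hb Hc.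
have E : forall n (p q : 'rV[F2]_n), p + q = 0 -> p = q.
  by move=> n p q H; rewrite -[p]addr0 -(row_add_self q) addrA H add0r.
by rewrite (E _ _ _ Ha) (E _ _ _ Hb) (E _ _ _ Hc).
Qed.

Definition maskv S w : 'rV[F2]_m := \row_i (if i \in S then w 0 i else 0).

Lemma inDelta S w : (w \in Delta S) = [forall i, (w 0 i != 0) ==> (i \in S)].
Proof. by rewrite inE. Qed.

Lemma DeltaP S w : w \in Delta S -> forall i, i \notin S -> w 0 i = 0.
Proof.
rewrite inDelta => /forallP H i Hi; move: (H i); rewrite (negbTE Hi) implybF.
by move/negPn/eqP.
Qed.
Lemma DeltaI S w : (forall i, i \notin S -> w 0 i = 0) -> w \in Delta S.
Proof.
move=> H; rewrite inDelta; apply/forallP => i; apply/implyP => Hw.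
by apply/negPn/negP => Hi; move: Hw; rewrite H ?eqxx.
Qed.

Lemma dotv_mask S u v : v \in Delta S -> dotv u v = dotv (maskv S u) v.
Proof.
move=> Hv; rewrite /dotv; apply: eq_bigr => i _; rewrite mxE.
by case: ifP => // /negbT Hi; rewrite (DeltaP Hv Hi) !mulr0.
Qed.
Lemma mask_in S w : maskv S w \in Delta S.
Proof. by apply: DeltaI => i Hi; rewrite mxE (negbTE Hi). Qed.
Lemma mask_id S w : w \in Delta S -> maskv S w = w.
Proof.
move=> Hw; apply/rowP => i; rewrite mxE; case: ifP => // /negbT Hi.
by rewrite (DeltaP Hw Hi).
Qed.
Lemma Delta_add S u v : u \in Delta S -> v \in Delta S -> u + v \in Delta S.
Proof.
by move=> Hu Hv; apply: DeltaI => i Hi; rewrite mxE (DeltaP Hu Hi) (DeltaP Hv Hi) addr0.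
Qed.
Lemma Delta0 S : 0 \in Delta S.
Proof. by apply: DeltaI => i _; rewrite mxE. Qed.
Lemma maskv0 S w : (maskv S w == 0) = (w \in Delta (~: S)).
Proof.
apply/eqP/idP => [H|H].
  apply: DeltaI => i; rewrite inE negbK => Hi.
  by move/rowP: H => /(_ i); rewrite !mxE Hi.
apply/rowP => i; rewrite !mxE; case: ifP => // Hi.
by rewrite (DeltaP H) // inE negbK.
Qed.

Definition unitv (i : 'I_m) : 'rV[F2]_m := \row_j ((j == i)%:R).
Lemma dotv_unit u i : dotv u (unitv i) = u 0 i.
Proof.
rewrite /dotv (bigD1 i) //= big1 => [|j /negbTE Hj]; rewrite mxE ?eqxx ?Hj.
  by rewrite mulr1 addr0.
by rewrite mulr0.
Qed.
Lemma unit_in S i : i \in S -> unitv i \in Delta S.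
Proof.
move=> Hi; apply: DeltaI => j Hj; rewrite mxE; case: eqP => // E.
by move: Hj; rewrite E Hi.
Qed.
Lemma witv S u : u \in Delta S -> u != 0 -> exists2 e, e \in Delta S & dotv u e = 1.
Proof.
move=> Hu Hn.
have [i Hi] : exists i, u 0 i != 0.
  apply/existsP; apply: contraR Hn => /existsPn H; apply/eqP/rowP => i.
  by rewrite mxE; apply/eqP; move: (H i); rewrite negbK.
exists (unitv i); last by rewrite dotv_unit (F2_neq0 Hi).
apply: unit_in; apply/negPn/negP => Hni; move: Hi; by rewrite (DeltaP Hu Hni) eqxx.
Qed.

Lemma cardDelta S : #|Delta S| = (2 ^ #|S|)%N.
Proof.
pose f w := [set i | w 0 i != 0].
have finj : injective f.
  move=> u v; rewrite /f => /setP H; apply/rowP => j; move: (H j); rewrite !inE.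
  by case: (F2cases (u 0 j)) => ->; case: (F2cases (v 0 j)) => ->; rewrite ?eqxx ?F2_one_neq0.
rewrite -card_powerset -(card_imset (Delta S) finj).
suff -> : f @: Delta S = powerset S by [].
apply/setP => T; rewrite powersetE; apply/imsetP/idP.
  move=> [w Hw ->]; apply/subsetP => i; rewrite inE => Hi.
  by apply/negPn/negP => Hni; move: Hi; rewrite (DeltaP Hw Hni) eqxx.
move=> HT; exists (\row_i ((i \in T)%:R)).
  apply: DeltaI => i Hi; rewrite mxE; case HiT: (i \in T) => //.
  by move: Hi; rewrite (subsetP HT _ HiT).
apply/setP => i; rewrite !inE mxE; case: (i \in T) => //=; by rewrite ?F2_one_neq0 ?eqxx.
Qed.
End S.
Lemma F2_10 : (1 == 0 :> F2) = false.
Proof. exact: negbTE F2_one_neq0. Qed.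
Lemma F2_01 : (0 == 1 :> F2) = false.
Proof. by rewrite eq_sym F2_10. Qed.

Section T.
Variable m : nat.
Variables L M N : {set 'I_m}.
Implicit Types (x y d e : triple m).

Lemma memsetP (T : finType) (A : {set T}) (P : pred T) (z : T) :
  (z \in [set t in A | P t]) = (z \in A) && P z.
Proof. by rewrite inE. Qed.

Definition proj x : triple m := (maskv L x.1.1, maskv N x.1.2, maskv M x.2).

Lemma inD2 d : (d \in D2 L M N) = [&& d.1.1 \in Delta L, d.1.2 \in Delta N & d.2 \in Delta M].
Proof. by rewrite inE. Qed.

Lemma dot3_proj x d : d \in D2 L M N -> dot3 x d = dot3 (proj x) d.
Proof.
by rewrite inD2 => /and3P [H1 H2 H3]; rewrite /dot3 /= (dotv_mask _ H1) (dotv_mask _ H2) (dotv_mask _ H3).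
Qed.
Lemma proj_in x : proj x \in D2 L M N.
Proof. by rewrite inD2 /= !mask_in. Qed.
Lemma proj_id d : d \in D2 L M N -> proj d = d.
Proof.
case: d => [[a b] c]; rewrite inD2 /= => /and3P [H1 H2 H3].
by rewrite /proj /= !mask_id.
Qed.
Lemma D2_add d e : d \in D2 L M N -> e \in D2 L M N -> tadd d e \in D2 L M N.
Proof.
rewrite !inD2 => /and3P [H1 H2 H3] /and3P [H1' H2' H3'].
by rewrite /tadd /= !Delta_add.
Qed.
Lemma t0_in : t0 m \in D2 L M N.
Proof. by rewrite inD2 /= !Delta0. Qed.

Lemma witD2 y : y \in D2 L M N -> y != t0 m -> exists2 e, e \in D2 L M N & dot3 y e = 1.
Proof.
case: y => [[a b] c]; rewrite inD2 /= => /and3P [H1 H2 H3] Hn.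
have [Ha|Ha] := eqVneq a 0.
  have [Hb|Hb] := eqVneq b 0.
    have [Hc|Hc] := eqVneq c 0.
      by move: Hn; rewrite Ha Hb Hc eqxx.
    have [e He He1] := witv H3 Hc.
    exists (0, 0, e); first by rewrite inD2 /= !Delta0 He.
    by rewrite /dot3 /= !dotv0r He1 !add0r.
  have [e He He1] := witv H2 Hb.
  exists (0, e, 0); first by rewrite inD2 /= !Delta0 He.
  by rewrite /dot3 /= !dotv0r He1 add0r addr0.
have [e He He1] := witv H1 Ha.
exists (e, 0, 0); first by rewrite inD2 /= !Delta0 He.
by rewrite /dot3 /= !dotv0r He1 !addr0.
Qed.

Lemma cardD2 : #|D2 L M N| = (2 ^ (#|L| + #|M| + #|N|))%N.
Proof.
have -> : D2 L M N = setX (setX (Delta L) (Delta N)) (Delta M).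
  by apply/setP => [[[a b] c]]; rewrite inD2 !in_setX /= andbA.
rewrite !cardsX !cardDelta -!expnD; congr (_ ^ _)%N.
by rewrite -!addnA [(#|N| + _)%N]addnC.
Qed.

Lemma half_D2 x e : e \in D2 L M N -> dot3 x e = 1 ->
  (2 * #|[set d in D2 L M N | dot3 x d == 1%R]|)%N = #|D2 L M N|.
Proof.
move=> He He1.
set B := [set d in D2 L M N | dot3 x d == 1].
set A := [set d in D2 L M N | dot3 x d == 0].
have tinj : injective (tadd e) by apply: (can_inj (taddK e)).
have HB : B = tadd e @: A.
  apply/setP => d; apply/idP/imsetP.
    rewrite inE => /andP [Hd /eqP Hd1]; exists (tadd e d); last by rewrite taddK.
    by rewrite inE D2_add //= dot3Dr He1 Hd1 F2_11.
  move=> [d' ]; rewrite inE => /andP [Hd /eqP Hd0] ->.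
  by rewrite inE D2_add //= dot3Dr He1 Hd0 addr0.
have HA : A = D2 L M N :\: B.
  apply/setP => d; rewrite in_setD [d \in A]inE [d \in B]inE.
  case: (d \in D2 L M N); rewrite ?andbF ?andbT //=.
  by case: (F2cases (dot3 x d)) => ->; rewrite ?eqxx ?F2_10 ?F2_01.
have HI : D2 L M N :&: B = B.
  by apply/setIidPr/subsetP => d; rewrite [d \in B]inE => /andP [].
rewrite -(cardsID B (D2 L M N)) HI -HA HB card_imset //.
by rewrite mul2n -addnn.
Qed.

Lemma card_enum_val (T : finType) (A : {set T}) (P : pred T) :
  #|[set j : 'I_#|A| | P (enum_val j)]| = #|[set d in A | P d]|.
Proof.
rewrite -(card_imset _ (@enum_val_inj _ (mem A))).
apply: eq_card => d; apply/imsetP/idP.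
  by move=> [j]; rewrite !inE => Hj ->; rewrite Hj andbT enum_valP.
rewrite inE => /andP [Hd HP]; exists (enum_rank_in Hd d); last by rewrite enum_rankK_in.
by rewrite inE enum_rankK_in.
Qed.

Lemma wt_cw x : wt (cw L M N x) = #|[set d in D2 L M N | dot3 x d == 1]|.
Proof.
have -> : [set d in D2 L M N | dot3 x d == 1] = [set d in D2star L M N | dot3 x d == 1].
  apply/setP => d; rewrite !memsetP /D2star in_setD1.
  have [->|] //= := eqVneq d (0, 0, 0).
  by rewrite (dot3_0r x) F2_01 andbF.
rewrite -(card_enum_val _ (fun d => dot3 x d == 1)) /wt /supp.
apply: eq_card => j; rewrite !inE mxE.
by case: (F2cases (dot3 x (enum_val j))) => ->; rewrite ?eqxx ?F2_10 ?F2_01.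
Qed.
End T.

Lemma wt0 n : wt (0 : 'rV[F2]_n) = 0%N.
Proof.
rewrite /wt /supp; apply/eqP; rewrite cards_eq0; apply/eqP/setP => j.
by rewrite !inE mxE eqxx.
Qed.

Lemma wt_sum n (c : 'rV[F2]_n) : wt c = (\sum_(j < n) (c 0%R j != 0%R : nat))%N.
Proof.
rewrite /wt /supp -sum1_card big_mkcond /=; apply: eq_bigr => j _.
by rewrite inE; case: (c 0%R j != 0%R).
Qed.

Lemma coord_half n (C : {set 'rV[F2]_n}) j : linear_code C ->
  (2 * #|[set c in C | c 0%R j != 0%R]| <= #|C|)%N.
Proof.
move=> [C0 Clin].
set A := [set c in C | c 0%R j != 0%R].
have [->|[c0 Hc0]] := set_0Vmem A; first by rewrite cards0.
have finj : injective (fun c => c + c0) by apply: addIr.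
have sub : (fun c => c + c0) @: A \subset C :\: A.
  apply/subsetP => c /imsetP [c' Hc' ->].
  move: Hc' Hc0; rewrite !memsetP => /andP [H1 H2] /andP [H3 H4].
  rewrite in_setD memsetP negb_and.
  have HC : c' + c0 \in C by rewrite -[c']scale1r Clin.
  by rewrite HC mxE (F2_neq0 H2) (F2_neq0 H4) F2_11 eqxx.
have := subset_leq_card sub; rewrite card_imset // => HAB.
have HI : C :&: A = A by apply/setIidPr/subsetP => c; rewrite memsetP => /andP [].
rewrite -(cardsID A C) HI mul2n -addnn leq_add2l //.
Qed.

Lemma plotkin n (C : {set 'rV[F2]_n}) d : linear_code C ->
  (forall c, c \in C -> c != 0%R -> d <= wt c)%N ->
  (2 * ((#|C| - 1) * d) <= n * #|C|)%N.
Proof.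
move=> HC Hd.
have C0 : 0 \in C by case: HC.
have E1 : ((#|C| - 1) * d <= \sum_(c in C) wt c)%N.
  rewrite (cardsD1 0 C) C0 add1n subn1 /= -sum_nat_const (big_setD1 0 C0) /=.
  apply: leq_trans (leq_addl _ _); apply: leq_sum => c; rewrite in_setD1 => /andP [H1 H2].
  exact: Hd.
have E2 : (\sum_(c in C) wt c = \sum_(j < n) #|[set c in C | c 0%R j != 0%R]|)%N.
  under eq_bigr do rewrite wt_sum.
  rewrite exchange_big /=; apply: eq_bigr => j _.
  rewrite -sum1_card big_mkcond /= [RHS]big_mkcond /=; apply: eq_bigr => c _.
  by rewrite memsetP; case: (c \in C); case: (c 0%R j != 0%R).
have E3 : (2 * ((#|C| - 1) * d) <= 2 * \sum_(c in C) wt c)%N by rewrite leq_mul2l E1 orbT.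
apply: leq_trans E3 _.
rewrite E2 big_distrr /= -[X in (_ <= X * _)%N]card_ord -sum_nat_const.
apply: leq_sum => j _; exact: coord_half.
Qed.

Section U.
Variable m : nat.
Variables L M N : {set 'I_m}.

Lemma cw_add (x y : triple m) : cw L M N (tadd x y) = cw L M N x + cw L M N y.
Proof. by apply/rowP => j; rewrite !mxE dot3Dl. Qed.
Lemma cw0 : cw L M N (t0 m) = 0.
Proof. by apply/rowP => j; rewrite !mxE dot3_0l. Qed.
Lemma enum_in (j : 'I_(clen L M N)) : enum_val j \in D2 L M N.
Proof. by have := enum_valP j; rewrite /D2star in_setD1 => /andP []. Qed.
Lemma cw_proj (x : triple m) : cw L M N x = cw L M N (proj L M N x).
Proof. by apply/rowP => j; rewrite !mxE -dot3_proj // enum_in. Qed.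

Lemma dich (x : triple m) : (0 < #|L| + #|M| + #|N|)%N ->
  (proj L M N x = t0 m /\ cw L M N x = 0) \/
  (cw L M N x != 0 /\ wt (cw L M N x) = (2 ^ (#|L| + #|M| + #|N|).-1)%N).
Proof.
move=> spos.
have [H|H] := eqVneq (proj L M N x) (t0 m).
  by left; split => //; rewrite cw_proj H cw0.
right.
have [e He He1] := witD2 (proj_in L M N x) H.
have He1' : dot3 x e = 1 by rewrite (dot3_proj x He).
have Hw : wt (cw L M N x) = (2 ^ (#|L| + #|M| + #|N|).-1)%N.
  have := half_D2 He He1'; rewrite cardD2 -(prednK spos) expnS -wt_cw => /eqP.
  by rewrite eqn_pmul2l // => /eqP.
split => //; apply/eqP => H0; move: Hw; rewrite H0 wt0 => /esym /eqP.
by rewrite expn_eq0.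
Qed.
End U.

Lemma geom_sum n : (\sum_(i < n.+1) 2 ^ (n - i) = 2 ^ n.+1 - 1)%N.
Proof.
elim: n => [|n IH]; first by rewrite big_ord1.
rewrite big_ord_recl /= subn0.
under eq_bigr do rewrite /bump /= add1n subSS.
rewrite IH (expnS 2 n.+1); have := expn_gt0 2 n.+1; lia.
Qed.

Lemma griesmer_sum s : (0 < s)%N ->
  (\sum_(i < s) ceil_div (2 ^ s.-1) (#|F2| ^ i) = 2 ^ s - 1)%N.
Proof.
case: s => // n _ /=; rewrite cardF2 -geom_sum; apply: eq_bigr => i _.
have Hi : (i <= n)%N by rewrite -ltnS.
rewrite /ceil_div; have -> : (2 ^ n = 2 ^ (n - i) * 2 ^ i)%N by rewrite -expnD subnK.
rewrite -addnBA ?expn_gt0 // divnMDl ?expn_gt0 // divn_small ?addn0 //.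
have := expn_gt0 2 i; lia.
Qed.

Theorem mainTheorem8 (m : nat) (L M N : {set 'I_m})
  (hL : L != set0) (hM : M != set0) (hN : N != set0) :
  let s := (#|L| + #|M| + #|N|)%N in
  let C := code L M N in
  [/\ clen L M N = (2 ^ s - 1)%N,
      nkd_code C s (2 ^ s.-1)%N,
      one_weight C,
      #|[set c in C | wt c == 0%N]| = 1%N &
      #|[set c in C | wt c == (2 ^ s.-1)%N]| = (2 ^ s - 1)%N] /\
  [/\ minimal_code C,
      griesmer_code C s (2 ^ s.-1)%N,
      distance_optimal C s (2 ^ s.-1)%N,
      Z L M N 0 = (2 ^ (3 * m - s))%N &
      Z L M N (2 ^ s.-1) = (2 ^ (3 * m - s) * (2 ^ s - 1))%N].
Proof.
move=> s C.
have Lp : (0 < #|L|)%N by rewrite card_gt0.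
have spos : (0 < s)%N by rewrite /s; lia.
have cD2 : #|D2 L M N| = (2 ^ s)%N by rewrite cardD2.
have dch := fun x => @dich m L M N x spos.
have Cmem : forall c, c \in C -> c = 0 \/ (c != 0 /\ wt c = (2 ^ s.-1)%N).
  move=> c /imsetP [x _ ->]; case: (dch x) => [[_ ->]|]; by [left|right].
have C0 : (0 : 'rV_(clen L M N)) \in C by rewrite -(cw0 L M N); apply: imset_f.
have cardC : #|C| = (2 ^ s)%N.
  have -> : C = cw L M N @: D2 L M N.
    apply/setP => c; apply/imsetP/imsetP => [[x _ ->]|[x _ ->]].
      by exists (proj L M N x); [exact: proj_in | exact: cw_proj].
    by exists x.
  rewrite card_in_imset ?cD2 // => d d' Hd Hd' E.
  have E2 : cw L M N (tadd d d') = 0 by rewrite cw_add E row_add_self.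
  case: (dch (tadd d d')) => [[Hp _]|[Hn _]]; last by rewrite E2 eqxx in Hn.
  by apply: tadd_eq0; rewrite -Hp proj_id // D2_add.
have clenE : clen L M N = (2 ^ s - 1)%N.
  have H0 : ((0,0,0) : triple m) \in D2 L M N := t0_in L M N.
  have := cardsD1 ((0,0,0) : triple m) (D2 L M N); rewrite H0 cD2 /clen /D2star /=.
  move=> ->; exact: (esym (addKn _ _)).
have hpow : (2 ^ s = 2 * 2 ^ s.-1)%N by rewrite -expnS prednK.
have lin : linear_code C.
  split => // a c c' /imsetP [x _ ->] /imsetP [y _ ->].
  case: (F2cases a) => ->; first by rewrite scale0r add0r imset_f.
  by rewrite scale1r -cw_add imset_f.
have CD1 : #|C :\ 0| = (2 ^ s - 1)%N by move: cardC; rewrite (cardsD1 0) C0 /= => <-; rewrite addKn.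
have md : min_dist C (2 ^ s.-1)%N.
  split; last first.
    move=> c Hc Hn; case: (Cmem c Hc) => [E|[_ ->]] //; by rewrite E eqxx in Hn.
  have [E|[c Hc]] := set_0Vmem (C :\ 0).
    by move: CD1; rewrite E cards0 hpow; have := expn_gt0 2 s.-1; lia.
  move: Hc; rewrite in_setD1 => /andP [Hn Hc]; exists c => //.
  by case: (Cmem c Hc) => [E|[_ ->]]; [rewrite E eqxx in Hn | rewrite Hn eqxx].
have nkd : nkd_code C s (2 ^ s.-1)%N by split => //; rewrite cardF2.
have Z0set : [set x : triple m | wt (cw L M N x) == 0%N] =
             setX (setX (Delta (~: L)) (Delta (~: N))) (Delta (~: M)).
  apply/setP => [[[a b] c]]; rewrite !in_setX -!maskv0 inE /=.
  case: (dch (a, b, c)) => [[Hp Hc]|[Hn ->]].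
    move: Hp; rewrite /proj /= => -[-> -> ->]; by rewrite Hc wt0 !eqxx.
  rewrite expn_eq0 /=; apply/esym/negP => /andP [/andP [/eqP H1 /eqP H2] /eqP H3].
  by move: Hn; rewrite cw_proj /proj /= H1 H2 H3 cw0 eqxx.
have Z0 : Z L M N 0 = (2 ^ (3 * m - s))%N.
  rewrite /Z Z0set !cardsX !cardDelta -!expnD; congr (_ ^ _)%N.
  have := cardsC L; have := cardsC M; have := cardsC N; rewrite card_ord /s.
  lia.
have Zs : Z L M N (2 ^ s.-1) = (2 ^ (3 * m - s) * (2 ^ s - 1))%N.
  rewrite /Z; have -> : [set x : triple m | wt (cw L M N x) == (2 ^ s.-1)%N] =
            ~: [set x : triple m | wt (cw L M N x) == 0%N].
    apply/setP => x; rewrite !inE.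
    case: (dch x) => [[_ ->]|[_ ->]]; rewrite ?wt0 ?eqxx ?expn_eq0 //=.
    by rewrite eq_sym expn_eq0.
  have := cardsC [set x : triple m | wt (cw L M N x) == 0%N].
  rewrite -/(Z L M N 0) Z0 !card_prod !card_mx cardF2 !mul1n -!expnD.
  have Hs : (s <= 3 * m)%N.
    have := max_card L; have := max_card M; have := max_card N; rewrite card_ord /s; lia.
  have -> : (m + m + m = (3 * m - s) + s)%N by lia.
  rewrite expnD mulnBr muln1; have := expn_gt0 2 s; have := expn_gt0 2 (3 * m - s).
  nia.
split; first split => //.
- move=> c c' Hc Hc' Hn Hn'.
  case: (Cmem c Hc) => [E|[_ ->]]; first by rewrite E eqxx in Hn.
  by case: (Cmem c' Hc') => [E|[_ ->]]; first by rewrite E eqxx in Hn'.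
- have -> : [set c in C | wt c == 0%N] = [set 0].
    apply/setP => c; rewrite memsetP in_set1.
    have [->|Hn] := eqVneq c 0; first by rewrite C0 wt0 eqxx.
    apply/negbTE/negP => /andP [Hc /eqP Hw]; case: (Cmem c Hc) => [E|[_ E]].
      by rewrite E eqxx in Hn.
    by move: Hw; rewrite E => /eqP; rewrite expn_eq0.
  exact: cards1.
- rewrite -CD1; apply: eq_card => c; rewrite !inE.
  have [->|Hn] := eqVneq c 0; first by rewrite wt0 eq_sym expn_eq0 andbF.
  case Hc: (c \in C) => //=; case: (Cmem c Hc) => [E|[_ ->]]; [by rewrite E eqxx in Hn | by rewrite eqxx].
split => //.
- move=> c c' Hc Hc' Hn Hn' Hsub; exists 1; rewrite scale1r.
  have Ew : wt c' = wt c.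
    case: (Cmem c Hc) => [E|[_ ->]]; first by rewrite E eqxx in Hn.
    by case: (Cmem c' Hc') => [E|[_ ->]]; first by rewrite E eqxx in Hn'.
  have Es : supp c' = supp c by apply/eqP; rewrite eqEcard Hsub /= -/(wt c) -/(wt c') Ew.
  apply/rowP => j; move/setP: Es => /(_ j); rewrite !inE.
  case: (F2cases (c 0 j)) => ->; case: (F2cases (c' 0 j)) => ->; by rewrite ?eqxx ?F2_10.
- by split => //; rewrite griesmer_sum // clenE.
- split => // -[C' [lin' card' [_ md']]].
  have := plotkin lin' md'; rewrite card' cardF2 clenE hpow.
  have := expn_gt0 2 s.-1; nia.
Qed.
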